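(* Let $n\ge 2$, let $(x_1,\dots,x_{n+1})$ be the standard coordinates on $\mathbb{R}^{n+1}$, and let $(y_1,\dots,y_{n+1})$ be another global coordinate system on $\mathbb{R}^{n+1}$ such that the coordinate transformation $(x_1,\dots,x_{n+1})\mapsto(y_1,\dots,y_{n+1})$ is a $C^2$ diffeomorphism of $\mathbb{R}^{n+1}$. Suppose that for every $C^2$ function $\varphi$ on $\mathbb{R}^{n+1}$, $\varphi$ satisfies $\sum_{i=1}^n \frac{\partial^2 \varphi}{\partial x_i^2} - \frac{\partial^2 \varphi}{\partial x_{n+1}^2} = 0$ everywhere if and only if $\varphi$ (expressed in the $y$-coordinates) satisfies $\sum_{i=1}^n \frac{\partial^2 \varphi}{\partial y_i^2} - \frac{\partial^2 \varphi}{\partial y_{n+1}^2} = 0$ everywhere. Then the coordinate transformation $(x_1,\dots,x_{n+1})\mapsto(y_1,\dots,y_{n+1})$ is $C^\infty$. *)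

(* Defs.v *)
From Stdlib Require Import Reals Lra.
From Stdlib Require Vectors.Fin.
Open Scope R_scope.

Definition pt (N : nat) := Fin.t N -> R.

Definition upd {N} (x : pt N) (i : Fin.t N) (t : R) : pt N :=
  fun j => if Fin.eq_dec i j then t else x j.

Definition cont {N} (f : pt N -> R) : Prop :=
  forall x eps, 0 < eps -> exists delta, 0 < delta /\
    forall y, (forall i, Rabs (y i - x i) < delta) -> Rabs (f y - f x) < eps.

Fixpoint Ck {N} (k : nat) (f : pt N -> R) : Prop :=
  cont f /\
  match k with
  | O => True
  | S k' => exists D : Fin.t N -> pt N -> R,
      (forall i x, derivable_pt_lim (fun t => f (upd x i t)) (x i) (D i x)) /\
      (forall i, Ck k' (D i))
  end.

Definition Ck_map {N} (k : nat) (F : pt N -> pt N) : Prop :=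
  forall j, Ck k (fun x => F x j).

Definition smooth_map {N} (F : pt N -> pt N) : Prop :=
  forall k, Ck_map k F.

Definition C2_diffeo {N} (F G : pt N -> pt N) : Prop :=
  (forall x, G (F x) = x) /\ (forall y, F (G y) = y) /\
  Ck_map 2 F /\ Ck_map 2 G.

Definition is_d2 {N} (f : pt N -> R) (i : Fin.t N) (x : pt N) (v : R) : Prop :=
  exists D : pt N -> R,
    (forall y, derivable_pt_lim (fun t => f (upd y i t)) (y i) (D y)) /\
    derivable_pt_lim (fun t => D (upd x i t)) (x i) v.

Fixpoint finsum (n : nat) : (Fin.t n -> R) -> R :=
  match n with
  | O => fun _ => 0
  | S m => fun g => g Fin.F1 + finsum m (fun j => g (Fin.FS j))
  end.

(* Coordinates of R^(n+1): spatial x_1..x_n are Fin.L 1 j, time x_(n+1) is last. *)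
Definition spc {n} (j : Fin.t n) : Fin.t (n + 1) := Fin.L 1 j.
Definition tim (n : nat) : Fin.t (n + 1) := Fin.R n Fin.F1.

Definition wave_at {n} (f : pt (n + 1) -> R) (x : pt (n + 1)) : Prop :=
  exists v : Fin.t (n + 1) -> R,
    (forall i, is_d2 f i x (v i)) /\
    finsum n (fun j => v (spc j)) - v (tim n) = 0.

(* Main.v *)
Require Import Defs.
From Stdlib Require Import Reals Lra Lia.
From Stdlib Require Vectors.Fin.
From Stdlib Require Import FunctionalExtensionality IndefiniteDescription List.
Open Scope R_scope.

Lemma upd_same {N} (x : pt N) i : upd x i (x i) = x.
Proof. apply functional_extensionality; intro j; unfold upd; destruct (Fin.eq_dec i j); subst; auto. Qed.
Lemma upd_upd {N} (x : pt N) i a b : upd (upd x i a) i b = upd x i b.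
Proof. apply functional_extensionality; intro j; unfold upd; destruct (Fin.eq_dec i j); auto. Qed.
Lemma upd_eq {N} (x : pt N) i a : upd x i a i = a.
Proof. unfold upd; destruct (Fin.eq_dec i i); congruence. Qed.
Lemma upd_neq {N} (x : pt N) i j a : i <> j -> upd x i a j = x j.
Proof. unfold upd; destruct (Fin.eq_dec i j); congruence. Qed.
Lemma upd_comm {N} (x : pt N) i j a b : i <> j -> upd (upd x i a) j b = upd (upd x j b) i a.
Proof. intro H; apply functional_extensionality; intro l; unfold upd;
  destruct (Fin.eq_dec j l); destruct (Fin.eq_dec i l); subst; auto; congruence. Qed.

Lemma finsum_ext N f g : (forall i, f i = g i) -> finsum N f = finsum N g.
Proof. revert f g; induction N; intros f g H; simpl; auto.
  rewrite H, (IHN _ (fun j => g (Fin.FS j))); auto. Qed.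
Lemma finsum_plus N f g : finsum N (fun i => f i + g i) = finsum N f + finsum N g.
Proof. revert f g; induction N; intros; simpl; [ring|]. rewrite IHN; ring. Qed.
Lemma finsum_scal N c f : finsum N (fun i => c * f i) = c * finsum N f.
Proof. revert f; induction N; intros; simpl; [ring|]. rewrite IHN; ring. Qed.
Lemma finsum_opp N f : finsum N (fun i => - f i) = - finsum N f.
Proof. revert f; induction N; intros; simpl; [ring|]. rewrite IHN; ring. Qed.
Lemma finsum_0 N : finsum N (fun _ => 0) = 0.
Proof. induction N; simpl; auto. rewrite IHN; ring. Qed.
Lemma finsum_const N c : finsum N (fun _ => c) = INR N * c.
Proof. induction N; simpl finsum; [simpl; ring|]. rewrite IHN, S_INR; ring. Qed.
Lemma finsum_comm N M (f : Fin.t N -> Fin.t M -> R) :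
  finsum N (fun i => finsum M (fun j => f i j)) = finsum M (fun j => finsum N (fun i => f i j)).
Proof. revert M f; induction N; intros; simpl.
  - rewrite finsum_0; auto.
  - rewrite IHN, <- finsum_plus; auto. Qed.
Lemma finsum_abs N f : Rabs (finsum N f) <= finsum N (fun i => Rabs (f i)).
Proof. revert f; induction N; intros; simpl. rewrite Rabs_R0; lra.
  eapply Rle_trans; [apply Rabs_triang|]. specialize (IHN (fun j => f (Fin.FS j))). lra. Qed.
Lemma finsum_le N f g : (forall i, f i <= g i) -> finsum N f <= finsum N g.
Proof. revert f g; induction N; intros f g H; simpl; [lra|].
  specialize (IHN (fun j => f (Fin.FS j)) (fun j => g (Fin.FS j)) (fun j => H _)). specialize (H Fin.F1). lra. Qed.

Definition dlt {N} (i j : Fin.t N) : R := if Fin.eq_dec i j then 1 else 0.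
Lemma dlt_sym {N} (i j : Fin.t N) : dlt i j = dlt j i.
Proof. unfold dlt; destruct (Fin.eq_dec i j), (Fin.eq_dec j i); subst; congruence. Qed.
Lemma dlt_eq {N} (i : Fin.t N) : dlt i i = 1.
Proof. unfold dlt; destruct (Fin.eq_dec i i); congruence. Qed.
Lemma dlt_neq {N} (i j : Fin.t N) : i <> j -> dlt i j = 0.
Proof. unfold dlt; destruct (Fin.eq_dec i j); congruence. Qed.

Lemma finsum_dlt N (j : Fin.t N) f : finsum N (fun i => dlt i j * f i) = f j.
Proof. revert f; induction N; intros f; [inversion j|].
  pattern j; apply Fin.caseS'; simpl.
  - rewrite dlt_eq. rewrite (finsum_ext _ _ (fun _ => 0)); [rewrite finsum_0; ring|].
    intro i; rewrite dlt_neq; [ring|]. intro H; inversion H.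
  - intro p. rewrite dlt_neq by (intro H; inversion H).
    rewrite (finsum_ext _ _ (fun i => dlt i p * f (Fin.FS i))).
    + rewrite IHN; ring.
    + intro i; unfold dlt; destruct (Fin.eq_dec (Fin.FS i) (Fin.FS p)), (Fin.eq_dec i p);
      subst; auto. apply Fin.FS_inj in e; congruence. congruence. Qed.
Lemma finsum_dlt' N (j : Fin.t N) f : finsum N (fun i => f i * dlt i j) = f j.
Proof. rewrite <- (finsum_dlt N j f). apply finsum_ext; intro; ring. Qed.
Lemma finsum_ifeq N (j : Fin.t N) A B :
  finsum N (fun i => if Fin.eq_dec i j then A else B) = A + (INR N - 1) * B.
Proof. rewrite (finsum_ext _ _ (fun i => dlt i j * (A - B) + B)).
  - rewrite finsum_plus, finsum_dlt, finsum_const; ring.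
  - intro i; unfold dlt; destruct (Fin.eq_dec i j); ring. Qed.

Lemma dpl_mult f g x lf lg : derivable_pt_lim f x lf -> derivable_pt_lim g x lg ->
  derivable_pt_lim (fun s => f s * g s) x (lf * g x + f x * lg).
Proof. intros; apply (derivable_pt_lim_mult f g); auto. Qed.
Lemma dpl_plus f g x lf lg : derivable_pt_lim f x lf -> derivable_pt_lim g x lg ->
  derivable_pt_lim (fun s => f s + g s) x (lf + lg).
Proof. intros; apply (derivable_pt_lim_plus f g); auto. Qed.
Lemma dpl_const c x : derivable_pt_lim (fun _ => c) x 0.
Proof. apply (derivable_pt_lim_const c). Qed.
Lemma dpl_id x : derivable_pt_lim (fun s => s) x 1.
Proof. apply derivable_pt_lim_id. Qed.
Lemma dpl_ext f g x l : (forall s, f s = g s) -> derivable_pt_lim f x l -> derivable_pt_lim g x l.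
Proof. intros H; replace g with f; auto. apply functional_extensionality; auto. Qed.
Lemma dpl_scal c f x l : derivable_pt_lim f x l -> derivable_pt_lim (fun s => c * f s) x (c * l).
Proof. intros H. replace (c * l) with (0 * f x + c * l) by ring.
  apply (dpl_mult (fun _ => c) f); auto. apply dpl_const. Qed.
Lemma dpl_finsum N (f : Fin.t N -> R -> R) l x :
  (forall a, derivable_pt_lim (f a) x (l a)) ->
  derivable_pt_lim (fun s => finsum N (fun a => f a s)) x (finsum N l).
Proof. revert f l; induction N; intros f l H; simpl.
  - apply dpl_const.
  - apply dpl_plus; [auto|]. apply (IHN (fun a => f (Fin.FS a)) (fun a => l (Fin.FS a))); auto. Qed.
Lemma dpl_shift g a s0 l : derivable_pt_lim g (a + s0) l ->
  derivable_pt_lim (fun s => g (a + s)) s0 l.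
Proof. intros H eps He. destruct (H eps He) as [d Hd]. exists d. intros h Hh Hl.
  replace (a + (s0 + h)) with ((a + s0) + h) by ring. auto. Qed.

Lemma MVT_gen f f' a b : (forall c, derivable_pt_lim f c (f' c)) ->
  exists c, f b - f a = f' c * (b - a) /\ Rabs (c - a) <= Rabs (b - a).
Proof. intro H. destruct (Rtotal_order a b) as [Hab|[Hab|Hab]].
  - destruct (MVT_cor2 f f' a b Hab (fun c _ => H c)) as [c [E Hc]].
    exists c; split; auto. rewrite !Rabs_right; lra.
  - subst; exists b; split; [ring|]. right; auto.
  - destruct (MVT_cor2 f f' b a Hab (fun c _ => H c)) as [c [E Hc]].
    exists c; split; [lra|]. rewrite !Rabs_left1; lra. Qed.

Definition ld {N} (f : pt N -> R) i x l := derivable_pt_lim (fun t => f (upd x i t)) (x i) l.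
Definition d1 {N} (f : pt N -> R) i (D : pt N -> R) := forall y, ld f i y (D y).

Lemma d1_any {N} (f : pt N -> R) i D : d1 f i D ->
  forall y s0, derivable_pt_lim (fun s => f (upd y i s)) s0 (D (upd y i s0)).
Proof. intros H y s0. specialize (H (upd y i s0)). unfold ld in H.
  rewrite upd_eq in H. eapply dpl_ext; [|exact H]. intro s; simpl. rewrite upd_upd; auto. Qed.

Lemma ld_mult {N} (f g : pt N -> R) i x lf lg : ld f i x lf -> ld g i x lg ->
  ld (fun y => f y * g y) i x (lf * g x + f x * lg).
Proof. intros Hf Hg. unfold ld. pose proof (dpl_mult _ _ _ _ _ Hf Hg) as H.
  cbv beta in H; rewrite upd_same in H; exact H. Qed.
Lemma ld_plus {N} (f g : pt N -> R) i x lf lg : ld f i x lf -> ld g i x lg ->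
  ld (fun y => f y + g y) i x (lf + lg).
Proof. intros Hf Hg. apply (dpl_plus _ _ _ _ _ Hf Hg). Qed.
Lemma ld_scal {N} (f : pt N -> R) c i x l : ld f i x l -> ld (fun y => c * f y) i x (c * l).
Proof. intros H; apply (dpl_scal c _ _ _ H). Qed.
Lemma ld_const {N} c i (x : pt N) : ld (fun _ => c) i x 0.
Proof. exact (dpl_const c (x i)). Qed.
Lemma ld_proj {N} a i (x : pt N) : ld (fun y => y a) i x (dlt i a).
Proof. unfold ld, upd, dlt. destruct (Fin.eq_dec i a).
  - apply dpl_id.
  - apply dpl_const. Qed.
Lemma ld_unique {N} (f : pt N -> R) i x l1 l2 : ld f i x l1 -> ld f i x l2 -> l1 = l2.
Proof. apply uniqueness_limite. Qed.
Lemma ld_ext {N} (f g : pt N -> R) i x l : (forall y, f y = g y) -> ld f i x l -> ld g i x l.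
Proof. intros H; replace g with f; auto. apply functional_extensionality; auto. Qed.
Lemma cont_const {N} c : cont (fun _ : pt N => c).
Proof. intros x e He; exists 1; split; [lra|]; intros; rewrite Rminus_diag, Rabs_R0; auto. Qed.
Lemma cont_plus {N} (f g : pt N -> R) : cont f -> cont g -> cont (fun y => f y + g y).
Proof. intros Hf Hg x e He.
  destruct (Hf x (e/2)) as [d1 [Hd1 H1]]; [lra|].
  destruct (Hg x (e/2)) as [d2 [Hd2 H2]]; [lra|].
  exists (Rmin d1 d2); split; [apply Rmin_glb_lt; auto|]. intros y Hy.
  assert (A1 := H1 y (fun i => Rlt_le_trans _ _ _ (Hy i) (Rmin_l _ _))).
  assert (A2 := H2 y (fun i => Rlt_le_trans _ _ _ (Hy i) (Rmin_r _ _))).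
  replace (f y + g y - (f x + g x)) with ((f y - f x) + (g y - g x)) by ring.
  eapply Rle_lt_trans; [apply Rabs_triang|]. lra. Qed.
Lemma cont_mult {N} (f g : pt N -> R) : cont f -> cont g -> cont (fun y => f y * g y).
Proof. intros Hf Hg x e He.
  set (A := Rabs (g x) + 1). set (B := Rabs (f x) + 1).
  assert (HA : 0 < A) by (unfold A; pose proof (Rabs_pos (g x)); lra).
  assert (HB : 0 < B) by (unfold B; pose proof (Rabs_pos (f x)); lra).
  destruct (Hf x (e/(2*A))) as [d1 [Hd1 H1]]; [apply Rdiv_lt_0_compat; lra|].
  destruct (Hg x (Rmin 1 (e/(2*B)))) as [d2 [Hd2 H2]].
  { apply Rmin_glb_lt; [lra|apply Rdiv_lt_0_compat; lra]. }
  exists (Rmin d1 d2); split; [apply Rmin_glb_lt; auto|]. intros y Hy.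
  assert (A1 := H1 y (fun i => Rlt_le_trans _ _ _ (Hy i) (Rmin_l _ _))).
  assert (A2 := H2 y (fun i => Rlt_le_trans _ _ _ (Hy i) (Rmin_r _ _))).
  assert (A3 : Rabs (g y) <= A).
  { unfold A. replace (g y) with (g x + (g y - g x)) by ring.
    eapply Rle_trans; [apply Rabs_triang|]. pose proof (Rmin_l 1 (e/(2*B))). lra. }
  assert (A4 : Rabs (g y - g x) < e / (2*B)) by (eapply Rlt_le_trans; [exact A2|apply Rmin_r]).
  replace (f y * g y - f x * g x) with ((f y - f x) * g y + f x * (g y - g x)) by ring.
  eapply Rle_lt_trans; [apply Rabs_triang|]. rewrite !Rabs_mult.
  assert (Rabs (f y - f x) * Rabs (g y) < e/(2*A) * A).
  { apply Rle_lt_trans with (Rabs (f y - f x) * A).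
    apply Rmult_le_compat_l; [apply Rabs_pos|lra]. apply Rmult_lt_compat_r; lra. }
  assert (Rabs (f x) * Rabs (g y - g x) <= B * (e/(2*B))).
  { apply Rmult_le_compat; try apply Rabs_pos; [unfold B; lra | lra]. }
  replace (e/(2*A)*A) with (e/2) in H by (field; lra).
  replace (B*(e/(2*B))) with (e/2) in H0 by (field; apply Rgt_not_eq; exact HB). lra. Qed.

Lemma Ck_cont {N} k (f : pt N -> R) : Ck k f -> cont f.
Proof. destruct k; simpl; tauto. Qed.
Lemma Ck_down {N} k (f : pt N -> R) : Ck (S k) f -> Ck k f.
Proof. revert f; induction k; intros f H.
  - simpl in *; tauto.
  - destruct H as [Hc [D [HD HDk]]]. split; auto. exists D; split; auto. Qed.
Lemma Ck_const {N} k c : Ck k (fun _ : pt N => c).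
Proof. revert c; induction k; intro c; (split; [apply cont_const|]); auto.
  exists (fun _ _ => 0); split; auto. intros i x. exact (dpl_const c (x i)). Qed.
Lemma Ck_plus {N} k (f g : pt N -> R) : Ck k f -> Ck k g -> Ck k (fun y => f y + g y).
Proof. revert f g; induction k; intros f g Hf Hg.
  - split; auto. apply cont_plus; apply (Ck_cont 0); auto.
  - destruct Hf as [Hfc [Df [HDf HDfk]]], Hg as [Hgc [Dg [HDg HDgk]]].
    split; [apply cont_plus; auto|]. exists (fun i y => Df i y + Dg i y); split; auto.
    intros i x. apply (ld_plus f g); [apply HDf|apply HDg]. Qed.
Lemma Ck_mult {N} k (f g : pt N -> R) : Ck k f -> Ck k g -> Ck k (fun y => f y * g y).
Proof. revert f g; induction k; intros f g Hf Hg.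
  - split; auto. apply cont_mult; apply (Ck_cont 0); auto.
  - pose proof (Ck_down _ _ Hf) as Hf'. pose proof (Ck_down _ _ Hg) as Hg'.
    destruct Hf as [Hfc [Df [HDf HDfk]]], Hg as [Hgc [Dg [HDg HDgk]]].
    split; [apply cont_mult; auto|]. exists (fun i y => Df i y * g y + f y * Dg i y); split.
    + intros i x. apply (ld_mult f g); [apply HDf|apply HDg].
    + intro i. apply Ck_plus; apply IHk; auto. Qed.
Lemma Ck_scal {N} k c (f : pt N -> R) : Ck k f -> Ck k (fun y => c * f y).
Proof. intro H. apply (Ck_mult k (fun _ => c) f); auto. apply Ck_const. Qed.
Lemma Ck_flat {N} (h : pt N -> R) : cont h -> (forall i, d1 h i (fun _ => 0)) -> forall k, Ck k h.
Proof. intros Hc Hd k; destruct k; simpl; split; auto.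
  exists (fun _ _ => 0); split; [intros i x; apply Hd|]. intro; apply Ck_const. Qed.
Lemma dpl_minus f g x lf lg : derivable_pt_lim f x lf -> derivable_pt_lim g x lg ->
  derivable_pt_lim (fun s => f s - g s) x (lf - lg).
Proof. intros; apply (derivable_pt_lim_minus f g); auto. Qed.

Lemma dist_upd2 {N} (x : pt N) i j a b l :
  Rabs (upd (upd x i a) j b l - x l) <= Rabs (a - x i) + Rabs (b - x j).
Proof. pose proof (Rabs_pos (a - x i)); pose proof (Rabs_pos (b - x j)).
  unfold upd. destruct (Fin.eq_dec j l), (Fin.eq_dec i l); subst; try lra;
  rewrite Rminus_diag, Rabs_R0; lra. Qed.

Lemma schwarz_half {N} (f : pt N -> R) i j Di Eij (x : pt N) h : i <> j -> d1 f i Di -> d1 Di j Eij ->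
  exists s t, Rabs s <= Rabs h /\ Rabs t <= Rabs h /\
   f (upd (upd x i (x i + h)) j (x j + h)) - f (upd (upd x i (x i + h)) j (x j + 0))
   - f (upd (upd x i (x i + 0)) j (x j + h)) + f (upd (upd x i (x i + 0)) j (x j + 0))
   = Eij (upd (upd x i (x i + s)) j (x j + t)) * (h * h).
Proof. intros Hij Hf HD.
  set (q := fun s u => upd (upd x i (x i + s)) j (x j + u)).
  assert (Hq : forall s u, q s u = upd (upd x j (x j + u)) i (x i + s)).
  { intros; unfold q; apply upd_comm; auto. }
  assert (Hd : forall u s0, derivable_pt_lim (fun s => f (q s u)) s0 (Di (q s0 u))).
  { intros u s0. rewrite (Hq s0 u). eapply dpl_ext; [intro s; rewrite (Hq s u); reflexivity|].
    apply (dpl_shift (fun sg => f (upd (upd x j (x j + u)) i sg))). apply d1_any; auto. }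
  destruct (MVT_gen (fun s => f (q s h) - f (q s 0)) (fun s => Di (q s h) - Di (q s 0)) 0 h)
    as [s [E1 Hs]].
  { intro c; apply dpl_minus; apply Hd. }
  assert (Hd2 : forall u0, derivable_pt_lim (fun u => Di (q s u)) u0 (Eij (q s u0))).
  { intros u0. unfold q. apply (dpl_shift (fun sg => Di (upd (upd x i (x i + s)) j sg))).
    apply d1_any; auto. }
  destruct (MVT_gen (fun u => Di (q s u)) (fun u => Eij (q s u)) 0 h) as [t [E2 Ht]]; auto.
  exists s, t. rewrite !Rminus_0_r in *. split; [auto|split; [auto|]].
  change (f (q h h) - f (q h 0) - f (q 0 h) + f (q 0 0) = Eij (q s t) * (h * h)).
  replace (f (q h h) - f (q h 0) - f (q 0 h) + f (q 0 0)) with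
    ((f (q h h) - f (q h 0)) - (f (q 0 h) - f (q 0 0))) by ring.
  rewrite E1, E2. ring. Qed.

Lemma schwarz {N} (f : pt N -> R) i j Di Dj Eij Eji : i <> j -> d1 f i Di -> d1 f j Dj ->
  d1 Di j Eij -> d1 Dj i Eji -> cont Eij -> cont Eji -> forall x, Eij x = Eji x.
Proof. intros Hij Hfi Hfj HDi HDj Hc1 Hc2 x.
  destruct (Req_dec (Eij x) (Eji x)) as [|Hne]; auto. exfalso.
  set (e := Rabs (Eij x - Eji x) / 2).
  assert (He : 0 < e) by (unfold e; apply Rdiv_lt_0_compat; [apply Rabs_pos_lt; lra|lra]).
  destruct (Hc1 x e He) as [d1 [Hd1 H1]]. destruct (Hc2 x e He) as [d2 [Hd2 H2]].
  set (h := Rmin d1 d2 / 4).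
  assert (Hh : 0 < h) by (unfold h; apply Rdiv_lt_0_compat; [apply Rmin_glb_lt; auto|lra]).
  destruct (schwarz_half f i j Di Eij x h Hij Hfi HDi) as [s [t [Hs [Ht E1]]]].
  assert (Hji : j <> i) by auto.
  destruct (schwarz_half f j i Dj Eji x h Hji Hfj HDj) as [s' [t' [Hs' [Ht' E2]]]].
  rewrite !(upd_comm x j i) in E2 by auto.
  assert (Eq : Eij (upd (upd x i (x i + s)) j (x j + t)) = Eji (upd (upd x j (x j + s')) i (x i + t'))).
  { apply Rmult_eq_reg_r with (h * h); [|apply Rgt_not_eq; nra]. rewrite <- E1.
    rewrite (upd_comm x j i) by auto. rewrite <- E2. ring. }
  rewrite (Rabs_pos_eq h) in Hs, Ht, Hs', Ht' by lra.
  assert (Hm1 : Rmin d1 d2 <= d1) by apply Rmin_l. assert (Hm2 : Rmin d1 d2 <= d2) by apply Rmin_r.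
  assert (A1 := H1 (upd (upd x i (x i + s)) j (x j + t))).
  assert (A2 := H2 (upd (upd x j (x j + s')) i (x i + t'))).
  assert (B1 : Rabs (Eij (upd (upd x i (x i + s)) j (x j + t)) - Eij x) < e).
  { apply A1; intro l. eapply Rle_lt_trans; [apply dist_upd2|].
    replace (x i + s - x i) with s by ring. replace (x j + t - x j) with t by ring.
    unfold h in *. lra. }
  assert (B2 : Rabs (Eji (upd (upd x j (x j + s')) i (x i + t')) - Eji x) < e).
  { apply A2; intro l. eapply Rle_lt_trans; [apply dist_upd2|].
    replace (x j + s' - x j) with s' by ring. replace (x i + t' - x i) with t' by ring.
    unfold h in *. lra. }
  rewrite Eq in B1.
  assert (Rabs (Eij x - Eji x) < 2 * e).
  { replace (Eij x - Eji x) with ((Eji (upd (upd x j (x j + s')) i (x i + t')) - Eji x)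
      - (Eji (upd (upd x j (x j + s')) i (x i + t')) - Eij x)) by ring.
    eapply Rle_lt_trans; [apply Rabs_triang|]. rewrite Rabs_Ropp. lra. }
  unfold e in H. lra. Qed.
Lemma fin_min N (P : Fin.t N -> R -> Prop) : (forall a, exists d, 0 < d /\ P a d) ->
  (forall a d d', 0 < d' <= d -> P a d -> P a d') -> exists d, 0 < d /\ forall a, P a d.
Proof. revert P; induction N; intros P H Hm.
  - exists 1; split; [lra|]. intro a; inversion a.
  - destruct (IHN (fun a => P (Fin.FS a))) as [d' [Hd' H']]; auto.
    { intros; eapply Hm; eauto. }
    destruct (H Fin.F1) as [d0 [Hd0 H0]].
    exists (Rmin d0 d'); split; [apply Rmin_glb_lt; auto|].
    intro a; pattern a; apply Fin.caseS'.
    + eapply Hm; [|exact H0]. split; [apply Rmin_glb_lt; auto|apply Rmin_l].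
    + intro p; eapply Hm; [|exact (H' p)]. split; [apply Rmin_glb_lt; auto|apply Rmin_r]. Qed.

Fixpoint enum N : list (Fin.t N) :=
  match N with 0 => nil | S M => Fin.F1 :: map Fin.FS (enum M) end.
Definition lsum {A} (L : list A) (g : A -> R) := fold_right (fun a r => g a + r) 0 L.
Lemma lsum_map {A B} (h : A -> B) L g : lsum (map h L) g = lsum L (fun a => g (h a)).
Proof. induction L; simpl; auto. unfold lsum in *; simpl; rewrite IHL; auto. Qed.
Lemma finsum_lsum N g : finsum N g = lsum (enum N) g.
Proof. revert g; induction N; intros; simpl; auto.
  unfold lsum at 1; simpl. fold (lsum (map Fin.FS (enum N)) g). rewrite lsum_map, IHN; auto. Qed.
Lemma enum_in N a : In a (enum N).
Proof. induction N; [inversion a|]. pattern a; apply Fin.caseS'; simpl; [left; auto|].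
  intro p; right; apply in_map; auto. Qed.
Lemma enum_nodup N : NoDup (enum N).
Proof. induction N; simpl; constructor.
  - intro H; apply in_map_iff in H. destruct H as [x [H _]]; inversion H.
  - apply NoDup_map_NoDup_ForallPairs; auto. intros x y _ _ H; apply Fin.FS_inj; auto. Qed.

Lemma finsum_nonneg N g : (forall i, 0 <= g i) -> 0 <= finsum N g.
Proof. intro H. rewrite <- (finsum_0 N). apply finsum_le; auto. Qed.
Lemma finsum_term N g a : (forall i, 0 <= g i) -> g a <= finsum N g.
Proof. intro H. rewrite <- (finsum_dlt N a g). apply finsum_le. intro i.
  unfold dlt; destruct (Fin.eq_dec i a); [lra|]. specialize (H i); lra. Qed.

Lemma frechet {N} (f : pt N -> R) D z e : (forall a, d1 f a (D a)) -> (forall a, cont (D a)) ->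
  0 < e -> exists d, 0 < d /\ forall w, (forall a, Rabs (w a - z a) < d) ->
  Rabs (f w - f z - finsum N (fun a => D a z * (w a - z a))) <= e * finsum N (fun a => Rabs (w a - z a)).
Proof. intros Hd Hc He.
  destruct (fin_min N (fun a d => forall y, (forall l, Rabs (y l - z l) < d) -> Rabs (D a y - D a z) < e))
    as [d [Hd0 Hmin]].
  { intro a. destruct (Hc a z e He) as [d [Hd0 H]]. exists d; auto. }
  { intros a d d' Hdd H y Hy. apply H. intro l. specialize (Hy l); lra. }
  exists d; split; auto. intros w Hw.
  set (mix := fun (L : list (Fin.t N)) => fun a => if in_dec Fin.eq_dec a L then w a else z a).
  assert (Hclose : forall L l, Rabs (mix L l - z l) < d).
  { intros L l; unfold mix; destruct (in_dec Fin.eq_dec l L); auto.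
    rewrite Rminus_diag, Rabs_R0; auto. }
  assert (Claim : forall L, NoDup L ->
    Rabs (f (mix L) - f z - lsum L (fun a => D a z * (w a - z a))) <= e * lsum L (fun a => Rabs (w a - z a))).
  { induction L as [|a L IH]; intro Hnd.
    - assert (mix nil = z) as -> by (apply functional_extensionality; intro; reflexivity).
      unfold lsum; simpl. replace (f z - f z - 0) with 0 by ring. rewrite Rabs_R0; lra.
    - inversion Hnd; subst. specialize (IH H2).
      assert (Hm : mix (a :: L) = upd (mix L) a (w a)).
      { apply functional_extensionality; intro l. unfold mix, upd.
        destruct (Fin.eq_dec a l).
        + subst; destruct (in_dec Fin.eq_dec l (l :: L)); auto. exfalso; apply n; left; auto.
        + destruct (in_dec Fin.eq_dec l (a :: L)), (in_dec Fin.eq_dec l L); auto.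
          * destruct i; [congruence|contradiction].
          * exfalso; apply n0; right; auto. }
      assert (Ha : mix L a = z a).
      { unfold mix; destruct (in_dec Fin.eq_dec a L); auto; contradiction. }
      destruct (MVT_gen (fun s => f (upd (mix L) a s)) (fun s => D a (upd (mix L) a s)) (z a) (w a))
        as [s [E Hs]].
      { intro c; apply d1_any; auto. }
      rewrite <- Ha, upd_same in E. rewrite Ha in E. rewrite <- Hm in E.
      assert (Hxi : Rabs (D a (upd (mix L) a s) - D a z) < e).
      { apply Hmin. intro l. unfold upd. destruct (Fin.eq_dec a l).
        - subst. specialize (Hw l); lra.
        - apply Hclose. }
      unfold lsum; simpl. fold (lsum L (fun a => D a z * (w a - z a))).
      fold (lsum L (fun a => Rabs (w a - z a))).
      replace (f (mix (a :: L)) - f z - (D a z * (w a - z a) + lsum L (fun a0 => D a0 z * (w a0 - z a0))))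
        with ((f (mix L) - f z - lsum L (fun a0 => D a0 z * (w a0 - z a0)))
              + (D a (upd (mix L) a s) - D a z) * (w a - z a)) by lra.
      eapply Rle_trans; [apply Rabs_triang|]. rewrite Rabs_mult.
      assert (Rabs (D a (upd (mix L) a s) - D a z) * Rabs (w a - z a) <= e * Rabs (w a - z a)).
      { apply Rmult_le_compat_r; [apply Rabs_pos|lra]. }
      lra. }
  specialize (Claim (enum N) (enum_nodup N)).
  assert (mix (enum N) = w) as Hw' by (apply functional_extensionality; intro l; unfold mix;
    destruct (in_dec Fin.eq_dec l (enum N)); auto; exfalso; apply n; apply enum_in).
  rewrite Hw' in Claim. rewrite !finsum_lsum; auto. Qed.

Lemma chain {N} (f : pt N -> R) D (c : R -> pt N) c' t0 :
  (forall a, d1 f a (D a)) -> (forall a, cont (D a)) ->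
  (forall a, derivable_pt_lim (fun t => c t a) t0 (c' a)) ->
  derivable_pt_lim (fun t => f (c t)) t0 (finsum N (fun a => D a (c t0) * c' a)).
Proof. intros Hd Hc Hcd eps He.
  set (z := c t0).
  set (A := finsum N (fun a => Rabs (c' a) + 1) + 1).
  set (B := finsum N (fun a => Rabs (D a z)) + 1).
  assert (HA0 : 0 <= finsum N (fun a => Rabs (c' a) + 1))
    by (apply finsum_nonneg; intro; pose proof (Rabs_pos (c' i)); lra).
  assert (HB0 : 0 <= finsum N (fun a => Rabs (D a z))) by (apply finsum_nonneg; intro; apply Rabs_pos).
  assert (HA : 1 <= A) by (unfold A; lra). assert (HB : 1 <= B) by (unfold B; lra).
  destruct (frechet f D z (eps / (4 * A)) Hd Hc) as [d1 [Hd1 Hf]].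
  { apply Rdiv_lt_0_compat; lra. }
  set (e2 := Rmin 1 (eps / (4 * B))).
  assert (He2 : 0 < e2) by (apply Rmin_glb_lt; [lra|apply Rdiv_lt_0_compat; lra]).
  destruct (fin_min N (fun a d => forall h, h <> 0 -> Rabs h < d ->
      Rabs ((c (t0 + h) a - c t0 a) / h - c' a) < e2)) as [d2 [Hd2 Hc2]].
  { intro a. destruct (Hcd a e2 He2) as [dd Hdd]. exists dd; split; [apply cond_pos|]. exact Hdd. }
  { intros a d d' Hdd H h Hh Hl. apply H; auto; lra. }
  assert (Hdel : 0 < Rmin d2 (d1 / A)) by (apply Rmin_glb_lt; [auto|apply Rdiv_lt_0_compat; lra]).
  exists (mkposreal _ Hdel). simpl. intros h Hh Hlt.
  assert (Hl2 : Rabs h < d2) by (eapply Rlt_le_trans; [exact Hlt|apply Rmin_r || apply Rmin_l]).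
  assert (Hl1 : Rabs h < d1 / A) by (eapply Rlt_le_trans; [exact Hlt|apply Rmin_r]).
  assert (Hh0 : 0 < Rabs h) by (apply Rabs_pos_lt; auto).
  set (w := c (t0 + h)).
  assert (Hwa : forall a, Rabs (w a - z a - c' a * h) <= e2 * Rabs h).
  { intro a. specialize (Hc2 a h Hh Hl2).
    replace (w a - z a - c' a * h) with (((c (t0 + h) a - c t0 a) / h - c' a) * h)
      by (unfold w, z; field; auto).
    rewrite Rabs_mult. apply Rmult_le_compat_r; [apply Rabs_pos|lra]. }
  assert (Hwb : forall a, Rabs (w a - z a) <= (Rabs (c' a) + 1) * Rabs h).
  { intro a. replace (w a - z a) with ((w a - z a - c' a * h) + c' a * h) by ring.
    eapply Rle_trans; [apply Rabs_triang|]. rewrite Rabs_mult.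
    specialize (Hwa a). assert (e2 <= 1) by apply Rmin_l. nra. }
  assert (Hsum : finsum N (fun a => Rabs (w a - z a)) <= A * Rabs h).
  { eapply Rle_trans; [apply (finsum_le _ _ (fun a => (Rabs (c' a) + 1) * Rabs h)); auto|].
    rewrite (finsum_ext _ _ (fun a => Rabs h * (Rabs (c' a) + 1))) by (intro; ring).
    rewrite finsum_scal. unfold A. nra. }
  assert (Hwc : forall a, Rabs (w a - z a) < d1).
  { intro a. eapply Rle_lt_trans; [apply Hwb|].
    assert (Rabs (c' a) + 1 <= A).
    { unfold A. pose proof (finsum_term N (fun a => Rabs (c' a) + 1) a) as T.
      simpl in T. assert (Hp : forall i, 0 <= Rabs (c' i) + 1) by (intro; pose proof (Rabs_pos (c' i)); lra).
      specialize (T Hp). lra. }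
    apply Rle_lt_trans with (A * Rabs h). apply Rmult_le_compat_r; [apply Rabs_pos|auto].
    apply Rmult_lt_reg_l with (/ A). apply Rinv_0_lt_compat; lra.
    replace (/ A * (A * Rabs h)) with (Rabs h) by (field; lra).
    replace (/ A * d1) with (d1 / A) by (field; lra). auto. }
  specialize (Hf w Hwc).
  assert (H2 : Rabs (finsum N (fun a => D a z * (w a - z a)) - finsum N (fun a => D a z * c' a) * h)
               <= eps / 4 * Rabs h).
  { assert (E0 : finsum N (fun a => D a z * c' a) * h = finsum N (fun a => D a z * c' a * h)).
    { rewrite Rmult_comm, <- finsum_scal. apply finsum_ext; intro; ring. }
    rewrite E0.
    replace (finsum N (fun a => D a z * (w a - z a)) - finsum N (fun a => D a z * c' a * h))
      with (finsum N (fun a => D a z * (w a - z a) + - (D a z * c' a * h)))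
      by (rewrite finsum_plus, finsum_opp; ring).
    eapply Rle_trans; [apply finsum_abs|].
    eapply Rle_trans; [apply (finsum_le _ _ (fun a => Rabs (D a z) * (e2 * Rabs h)))|].
    { intro a. replace (D a z * (w a - z a) + - (D a z * c' a * h)) with (D a z * (w a - z a - c' a * h)) by ring.
      rewrite Rabs_mult. apply Rmult_le_compat_l; [apply Rabs_pos|apply Hwa]. }
    rewrite (finsum_ext _ _ (fun a => (e2 * Rabs h) * Rabs (D a z))) by (intro; ring).
    rewrite finsum_scal.
    assert (e2 * B <= eps / 4).
    { assert (e2 <= eps / (4 * B)) by apply Rmin_r.
      apply Rmult_le_compat_r with (r := B) in H; [|lra].
      replace (eps / (4 * B) * B) with (eps / 4) in H by (field; lra). lra. }
    unfold B in H. nra. }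
  assert (H1 : Rabs (f w - f z - finsum N (fun a => D a z * (w a - z a))) <= eps / 4 * Rabs h).
  { eapply Rle_trans; [exact Hf|].
    replace (eps / 4 * Rabs h) with (eps / (4 * A) * (A * Rabs h)) by (field; lra).
    apply Rmult_le_compat_l; auto. left; apply Rdiv_lt_0_compat; lra. }
  set (L := finsum N (fun a => D a z * c' a)).
  assert (Htot : Rabs (f w - f z - L * h) <= eps / 2 * Rabs h).
  { replace (f w - f z - L * h) with ((f w - f z - finsum N (fun a => D a z * (w a - z a)))
       + (finsum N (fun a => D a z * (w a - z a)) - L * h)) by ring.
    eapply Rle_trans; [apply Rabs_triang|]. unfold L. lra. }
  replace ((f w - f z) / h - L) with ((f w - f z - L * h) / h) by (field; auto).
  unfold Rdiv. rewrite Rabs_mult, Rabs_inv.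
  apply Rle_lt_trans with (eps / 2 * Rabs h * / Rabs h).
  - apply Rmult_le_compat_r; auto. left; apply Rinv_0_lt_compat; auto.
  - replace (eps / 2 * Rabs h * / Rabs h) with (eps / 2) by (field; lra). lra. Qed.
Lemma core N (eps : Fin.t N -> R) (t : Fin.t N) (DP : Fin.t N -> Fin.t N -> pt N -> R)
  EP (K : pt N -> Fin.t N -> Fin.t N -> R) :
  (forall i, eps i * eps i = 1) -> 3 <= INR N ->
  (forall a i k, d1 (DP a i) k (EP a i k)) ->
  (forall a i k x, EP a i k x = EP a k i x) ->
  (forall x k i, finsum N (fun a => K x k a * DP a i x) = dlt k i) ->
  (forall x a j, finsum N (fun b => DP a b x * K x b j) = dlt a j) ->
  (forall x a, finsum N (fun i => eps i * EP a i i x) = 0) ->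
  (forall x a b, a <> b -> finsum N (fun i => eps i * (DP a i x * DP b i x)) = 0) ->
  (forall x a, finsum N (fun i => eps i * (DP a i x * DP a i x))
               + eps a * finsum N (fun i => eps i * (DP t i x * DP t i x)) = 0) ->
  forall a i k x, EP a i k x = 0.
Proof. intros Heps HN dDP Hsym KJ JK Wv Qoff Qdiag.
  set (hf := fun i j z => finsum N (fun a => eps a * (DP a i z * DP a j z))).
  set (mu := fun z => - finsum N (fun i => eps i * (DP t i z * DP t i z))).
  assert (HQ : forall z a b, finsum N (fun i => eps i * (DP a i z * DP b i z)) = mu z * eps a * dlt a b).
  { intros z a b. destruct (Fin.eq_dec a b) as [->|Hab].
    - rewrite dlt_eq. pose proof (Qdiag z b). unfold mu. lra.
    - rewrite dlt_neq, Qoff; auto; ring. }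
  assert (Hstar : forall z k b, eps k * DP b k z = mu z * eps b * K z k b).
  { intros z k b.
    transitivity (finsum N (fun a => K z k a * finsum N (fun i => eps i * (DP a i z * DP b i z)))).
    - rewrite (finsum_ext _ _ (fun a => finsum N (fun i => K z k a * (eps i * (DP a i z * DP b i z)))))
        by (intro; rewrite <- finsum_scal; auto).
      rewrite finsum_comm.
      rewrite (finsum_ext _ _ (fun i => (eps i * DP b i z) * finsum N (fun a => K z k a * DP a i z))).
      2:{ intro i. rewrite <- finsum_scal. apply finsum_ext; intro; ring. }
      rewrite (finsum_ext _ _ (fun i => (eps i * DP b i z) * dlt i k)).
      2:{ intro i; rewrite KJ, dlt_sym; auto. }
      rewrite finsum_dlt'; auto.
    - rewrite (finsum_ext _ _ (fun a => (K z k a * mu z * eps a) * dlt a b)).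
      2:{ intro a; rewrite HQ; ring. }
      rewrite finsum_dlt'; ring. }
  assert (Hh : forall z i j, hf i j z = mu z * eps j * dlt i j).
  { intros z i j. unfold hf.
    rewrite (finsum_ext _ _ (fun a => (eps j * mu z) * (K z j a * DP a i z))).
    2:{ intro a. assert (E : DP a j z = eps j * (mu z * eps a * K z j a)).
        { rewrite <- Hstar. rewrite <- Rmult_assoc, Heps; ring. }
        rewrite E.
        replace (eps a * (DP a i z * (eps j * (mu z * eps a * K z j a))))
          with ((eps a * eps a) * ((eps j * mu z) * (K z j a * DP a i z))) by ring.
        rewrite Heps; ring. }
    rewrite finsum_scal, KJ, dlt_sym; ring. }
  intros a0 i0 k0 x.
  set (dh := fun i j k => finsum N (fun a => eps a * (EP a i k x * DP a j x + DP a i x * EP a j k x))).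
  assert (Hdh : forall i j k, ld (hf i j) k x (dh i j k)).
  { intros i j k. unfold ld, hf, dh. apply dpl_finsum. intro a.
    apply (ld_scal (fun y => DP a i y * DP a j y)). apply ld_mult; apply dDP. }
  assert (H3 : forall i k, dh i i k = eps i * eps t * dh t t k).
  { intros i k. apply (ld_unique (hf i i) k x); auto.
    apply (ld_ext (fun y => eps i * eps t * hf t t y)).
    - intro y. rewrite !Hh, !dlt_eq. replace (eps i * eps t * (mu y * eps t * 1))
        with ((eps t * eps t) * (eps i * mu y)) by ring. rewrite Heps; ring.
    - apply ld_scal; auto. }
  assert (H4 : forall i j k, i <> j -> dh i j k = 0).
  { intros i j k Hij. apply (ld_unique (hf i j) k x); auto.
    apply (ld_ext (fun _ => 0)).
    - intro y. rewrite Hh, dlt_neq; auto; ring.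
    - apply ld_const. }
  set (Gm := fun i k j => finsum N (fun a => eps a * (EP a i k x * DP a j x))).
  assert (Hdg : forall i j k, dh i j k = Gm i k j + Gm j k i).
  { intros i j k. unfold dh, Gm. rewrite <- finsum_plus. apply finsum_ext; intro; ring. }
  assert (GS : forall i k j, Gm i k j = Gm k i j).
  { intros i k j. unfold Gm. apply finsum_ext; intro a. rewrite Hsym; auto. }
  set (m := fun k => eps t * Gm t k t).
  assert (H5 : forall i k, Gm i k i = eps i * m k).
  { intros i k. pose proof (H3 i k) as E. rewrite !Hdg in E. unfold m.
    replace (eps i * (eps t * Gm t k t)) with ((eps i * eps t * (Gm t k t + Gm t k t)) / 2) by field.
    rewrite <- E. field. }
  assert (H6 : forall i j, i <> j -> Gm i i j = - (eps i * m j)).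
  { intros i j Hij. pose proof (H4 i j i Hij) as E. rewrite Hdg, (GS j i i), H5 in E. lra. }
  assert (H7 : forall j, finsum N (fun i => eps i * Gm i i j) = 0).
  { intro j. unfold Gm.
    rewrite (finsum_ext _ _ (fun i => finsum N (fun a => (eps a * DP a j x) * (eps i * EP a i i x)))).
    2:{ intro i. rewrite <- finsum_scal. apply finsum_ext; intro; ring. }
    rewrite finsum_comm.
    rewrite (finsum_ext _ _ (fun a => (eps a * DP a j x) * 0)).
    2:{ intro a. rewrite <- Wv with x a. rewrite <- finsum_scal. auto. }
    rewrite (finsum_ext _ _ (fun _ => 0)) by (intro; ring). apply finsum_0. }
  assert (Hm0 : forall j, m j = 0).
  { intro j. pose proof (H7 j) as E.
    rewrite (finsum_ext _ _ (fun i => if Fin.eq_dec i j then m j else - m j)) in E.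
    2:{ intro i. destruct (Fin.eq_dec i j) as [->|Hij].
        - rewrite H5, <- Rmult_assoc, Heps; ring.
        - rewrite H6; auto. replace (eps i * - (eps i * m j)) with (- ((eps i * eps i) * m j)) by ring.
          rewrite Heps; ring. }
    rewrite finsum_ifeq in E. nra. }
  assert (H9 : forall i j k, dh i j k = 0).
  { intros i j k. destruct (Fin.eq_dec i j) as [<-|Hij]; [|auto].
    rewrite H3, Hdg, H5, Hm0. ring. }
  assert (H10 : forall i k j, Gm i k j = 0).
  { intros i k j. assert (A : forall i k j, Gm i k j = - Gm j k i).
    { intros i' k' j'. pose proof (H9 i' j' k') as E. rewrite Hdg in E. lra. }
    pose proof (A i k j). pose proof (GS j k i). pose proof (A k j i). pose proof (GS i j k).
    pose proof (A j i k). pose proof (GS k i j). lra. }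
  assert (E : finsum N (fun j => Gm i0 k0 j * K x j a0) = eps a0 * EP a0 i0 k0 x).
  { unfold Gm.
    rewrite (finsum_ext _ _ (fun j => finsum N (fun a => (eps a * EP a i0 k0 x) * (DP a j x * K x j a0)))).
    2:{ intro j. rewrite Rmult_comm, <- finsum_scal. apply finsum_ext; intro; ring. }
    rewrite finsum_comm.
    rewrite (finsum_ext _ _ (fun a => (eps a * EP a i0 k0 x) * dlt a a0)).
    2:{ intro a. rewrite finsum_scal, JK; auto. }
    apply finsum_dlt'. }
  rewrite (finsum_ext _ _ (fun _ => 0)) in E by (intro; rewrite H10; ring).
  rewrite finsum_0 in E.
  replace (EP a0 i0 k0 x) with (eps a0 * (eps a0 * EP a0 i0 k0 x)) by (rewrite <- Rmult_assoc, Heps; ring).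
  rewrite <- E; ring. Qed.
Definition epsn (n : nat) (i : Fin.t (n + 1)) : R := if Fin.eq_dec i (tim n) then -1 else 1.

Lemma finsum_split n g : finsum (n + 1) g = finsum n (fun j => g (spc j)) + g (tim n).
Proof. revert g; induction n; intro g.
  - simpl. unfold tim; simpl. ring.
  - change (g Fin.F1 + finsum (n + 1) (fun j => g (Fin.FS j)) = finsum (S n) (fun j => g (spc j)) + g (tim (S n))).
    rewrite (IHn (fun j => g (Fin.FS j))). simpl. unfold spc, tim; simpl. ring. Qed.

Lemma spc_tim n (j : Fin.t n) : spc j <> tim n.
Proof. intro H. apply (f_equal (fun p => proj1_sig (Fin.to_nat p))) in H.
  unfold spc, tim in H. rewrite Fin.L_sanity, Fin.R_sanity in H. simpl in H.
  revert H; destruct (Fin.to_nat j) as [k Hk]; simpl; intro; lia. Qed.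

Lemma epsn2 n i : epsn n i * epsn n i = 1.
Proof. unfold epsn; destruct (Fin.eq_dec i (tim n)); ring. Qed.
Lemma epsn_t n : epsn n (tim n) = -1.
Proof. unfold epsn; destruct (Fin.eq_dec (tim n) (tim n)); congruence. Qed.

Lemma wave_sum n (v : Fin.t (n + 1) -> R) :
  finsum n (fun j => v (spc j)) - v (tim n) = finsum (n + 1) (fun i => epsn n i * v i).
Proof. rewrite finsum_split, epsn_t.
  rewrite (finsum_ext _ (fun j => epsn n (spc j) * v (spc j)) (fun j => v (spc j))); [ring|].
  intro j. unfold epsn. destruct (Fin.eq_dec (spc j) (tim n)); [exfalso; eapply spc_tim; eauto|ring]. Qed.

Lemma is_d2_unique {N} (f : pt N -> R) i x v D w : is_d2 f i x v -> d1 f i D -> ld D i x w -> v = w.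
Proof. intros [D0 [H0 H1]] HD Hw.
  assert (E : forall y, D0 y = D y) by (intro y; apply (ld_unique f i y); [apply H0|apply HD]).
  apply (ld_unique D i x); [|exact Hw]. apply (ld_ext D0 D); [exact E|exact H1]. Qed.

Lemma ld_val {N} (f : pt N -> R) i x l l' : ld f i x l -> l = l' -> ld f i x l'.
Proof. intros H ->; auto. Qed.

Lemma extract {N} (P : pt N -> pt N) : Ck_map 2 P -> exists DP EP,
  (forall a, cont (fun x => P x a)) /\ (forall a i, d1 (fun x => P x a) i (DP a i)) /\
  (forall a i, cont (DP a i)) /\ (forall a i k, d1 (DP a i) k (EP a i k)) /\
  (forall a i k, cont (EP a i k)).
Proof. intro HP.
  destruct (functional_choice (fun a (Da : Fin.t N -> pt N -> R) =>
     (forall i, d1 (fun x => P x a) i (Da i)) /\ forall i, Ck 1 (Da i))) as [DP HDP].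
  { intro a. destruct (HP a) as [_ [D [H1 H2]]]. exists D; split; [intros i y; apply H1|exact H2]. }
  destruct (functional_choice (fun a (Ea : Fin.t N -> Fin.t N -> pt N -> R) =>
     forall i, (forall k, d1 (DP a i) k (Ea i k)) /\ forall k, cont (Ea i k))) as [EP HEP].
  { intro a. apply (functional_choice (fun i (Ei : Fin.t N -> pt N -> R) =>
      (forall k, d1 (DP a i) k (Ei k)) /\ forall k, cont (Ei k))).
    intro i. destruct (proj2 (HDP a) i) as [_ [E [H1 H2]]]. exists E; split.
    - intros k y; apply H1.
    - intro k; apply (H2 k). }
  exists DP, EP. repeat split.
  - intro a; apply (Ck_cont 2), HP.
  - intros; apply HDP.
  - intros a i; apply (Ck_cont 1), HDP.
  - intros; apply HEP.
  - intros; apply HEP. Qed.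
Lemma test n (F G : pt (n + 1) -> pt (n + 1)) DF EF (al be ga : R) a0 a b d e :
  (forall y, F (G y) = y) ->
  (forall a, Ck 2 (fun x => F x a)) ->
  (forall a i, d1 (fun x => F x a) i (DF a i)) ->
  (forall a i k, d1 (DF a i) k (EF a i k)) ->
  (forall phi : pt (n + 1) -> R, Ck 2 phi ->
     ((forall x, wave_at phi x) <-> (forall y, wave_at (fun y' => phi (G y')) y))) ->
  be * epsn n a * dlt a b + ga * epsn n d * dlt d e = 0 ->
  forall x, finsum (n + 1) (fun i => epsn n i * (al * EF a0 i i x
      + (be * ((EF a i i x * F x b + DF a i x * DF b i x) + (DF a i x * DF b i x + F x a * EF b i i x))
      + ga * ((EF d i i x * F x e + DF d i x * DF e i x) + (DF d i x * DF e i x + F x d * EF e i i x))))) = 0.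
Proof. intros FG HF dF dDF H Hc x.
  set (phi := fun x : pt (n + 1) => al * F x a0 + (be * (F x a * F x b) + ga * (F x d * F x e))).
  assert (Hphi : Ck 2 phi).
  { apply Ck_plus; [apply Ck_scal; auto|]. apply Ck_plus; apply Ck_scal; apply Ck_mult; auto. }
  assert (Hy : forall y, wave_at (fun y' => phi (G y')) y).
  { intro y.
    assert (E : (fun y' => phi (G y')) = (fun y' => al * y' a0 + (be * (y' a * y' b) + ga * (y' d * y' e)))).
    { apply functional_extensionality; intro y'; unfold phi; rewrite FG; auto. }
    rewrite E.
    set (V := fun i => 2 * be * (dlt i a * dlt i b) + 2 * ga * (dlt i d * dlt i e)).
    exists V. split.
    - intro i. exists (fun z => al * dlt i a0 + (be * (dlt i a * z b + z a * dlt i b) + ga * (dlt i d * z e + z d * dlt i e))).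
      split.
      + intro z. change (ld (fun y => al * y a0 + (be * (y a * y b) + ga * (y d * y e))) i z
          (al * dlt i a0 + (be * (dlt i a * z b + z a * dlt i b) + ga * (dlt i d * z e + z d * dlt i e)))).
        eapply ld_val; [apply ld_plus; [apply ld_scal, ld_proj|];
        apply ld_plus; apply ld_scal; apply ld_mult; apply ld_proj|cbv beta; ring].
      + change (ld (fun z => al * dlt i a0 + (be * (dlt i a * z b + z a * dlt i b) + ga * (dlt i d * z e + z d * dlt i e))) i y
          (2 * be * (dlt i a * dlt i b) + 2 * ga * (dlt i d * dlt i e))).
        eapply ld_val.
        * apply ld_plus; [apply ld_scal, ld_const|].
          apply ld_plus; apply ld_scal; apply ld_plus; apply ld_mult; try apply ld_const; apply ld_proj.
        * cbv beta; ring.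
    - rewrite wave_sum. unfold V.
      rewrite (finsum_ext _ _ (fun i => 2 * be * (dlt i a * (epsn n i * dlt i b)) + 2 * ga * (dlt i d * (epsn n i * dlt i e)))) by (intro; ring).
      rewrite finsum_plus, !finsum_scal, !finsum_dlt.
      replace (2 * be * (epsn n a * dlt a b) + 2 * ga * (epsn n d * dlt d e))
        with (2 * (be * epsn n a * dlt a b + ga * epsn n d * dlt d e)) by ring.
      rewrite Hc; ring. }
  destruct (proj2 (H phi Hphi) Hy x) as [v [Hv Hs]].
  rewrite wave_sum in Hs. rewrite <- Hs. apply finsum_ext. intro i. f_equal.
  symmetry.
  apply (is_d2_unique phi i x (v i) (fun y => al * DF a0 i y + (be * (DF a i y * F y b + F y a * DF b i y)
      + ga * (DF d i y * F y e + F y d * DF e i y)))); [apply Hv| |].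
  - intro y. eapply ld_val; [apply ld_plus; [apply ld_scal, dF|];
    apply ld_plus; apply ld_scal; apply ld_mult; apply dF|cbv beta; ring].
  - eapply ld_val.
    + apply ld_plus; [apply ld_scal, dDF|].
      apply ld_plus; apply ld_scal; apply ld_plus; apply ld_mult; first [apply dDF | apply dF].
    + cbv beta; ring. Qed.

Theorem corollary2p4 (n : nat) (hn : (2 <= n)%nat)
  (F G : pt (n + 1) -> pt (n + 1)) :
  C2_diffeo F G ->
  (forall phi : pt (n + 1) -> R, Ck 2 phi ->
     ((forall x, wave_at phi x) <-> (forall y, wave_at (fun y' => phi (G y')) y))) ->
  smooth_map F.
Proof.
  intros [GF [FG [HF HG]]] H.
  destruct (extract F HF) as [DF [EF [HFc [dF [DFc [dDF EFc]]]]]].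
  destruct (extract G HG) as [DG [EG [HGc [dG [DGc [dDG EGc]]]]]].
  assert (HF2 : forall a, Ck 2 (fun x => F x a)) by exact HF.
  assert (W : forall x a, finsum (n + 1) (fun i => epsn n i * EF a i i x) = 0).
  { intros x a. pose proof (test n F G DF EF 1 0 0 a a a a a FG HF2 dF dDF H) as T.
    specialize (T ltac:(ring) x). rewrite <- T. apply finsum_ext; intro; ring. }
  assert (Qoff : forall x a b, a <> b -> finsum (n + 1) (fun i => epsn n i * (DF a i x * DF b i x)) = 0).
  { intros x a b Hab. pose proof (test n F G DF EF 0 1 0 a a b a a FG HF2 dF dDF H) as T.
    specialize (T ltac:(rewrite dlt_neq by auto; ring) x).
    rewrite (finsum_ext _ _ (fun i => F x b * (epsn n i * EF a i i x) + (2 * (epsn n i * (DF a i x * DF b i x))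
       + F x a * (epsn n i * EF b i i x)))) in T by (intro; ring).
    rewrite !finsum_plus, !finsum_scal, !W in T. lra. }
  assert (Qdiag : forall x a, finsum (n + 1) (fun i => epsn n i * (DF a i x * DF a i x))
      + epsn n a * finsum (n + 1) (fun i => epsn n i * (DF (tim n) i x * DF (tim n) i x)) = 0).
  { intros x a. pose proof (test n F G DF EF 0 1 (epsn n a) a a a (tim n) (tim n) FG HF2 dF dDF H) as T.
    specialize (T ltac:(rewrite !dlt_eq, epsn_t; ring) x).
    rewrite (finsum_ext _ _ (fun i => F x a * (epsn n i * EF a i i x) + (2 * (epsn n i * (DF a i x * DF a i x))
       + (F x a * (epsn n i * EF a i i x) + ((epsn n a * F x (tim n)) * (epsn n i * EF (tim n) i i x)
       + ((2 * epsn n a) * (epsn n i * (DF (tim n) i x * DF (tim n) i x))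
       + (epsn n a * F x (tim n)) * (epsn n i * EF (tim n) i i x))))))) in T by (intro; ring).
    rewrite !finsum_plus, !finsum_scal, !W in T. lra. }
  assert (Sym : forall a i k x, EF a i k x = EF a k i x).
  { intros a i k x. destruct (Fin.eq_dec i k) as [->|Hik]; auto.
    apply (schwarz (fun x => F x a) i k (DF a i) (DF a k)); auto. }
  assert (KJ : forall x k i, finsum (n + 1) (fun a => DG k a (F x) * DF a i x) = dlt k i).
  { intros x k i.
    pose proof (chain (fun y => G y k) (DG k) (fun t => F (upd x i t)) (fun a => DF a i x) (x i)
      (dG k) (DGc k) (fun a => dF a i x)) as C.
    cbv beta in C. rewrite upd_same in C.
    rewrite dlt_sym. apply (uniqueness_limite (fun t => G (F (upd x i t)) k) (x i)); [exact C|].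
    apply (dpl_ext (fun s => upd x i s k)); [intro s; rewrite GF; auto|exact (ld_proj k i x)]. }
  assert (JK : forall x a j, finsum (n + 1) (fun b => DF a b x * DG b j (F x)) = dlt a j).
  { intros x a j. set (y := F x).
    pose proof (chain (fun z => F z a) (DF a) (fun t => G (upd y j t)) (fun b => DG b j y) (y j)
      (dF a) (DFc a) (fun b => dG b j y)) as C.
    cbv beta in C. rewrite upd_same in C. replace (G y) with x in C by (unfold y; auto).
    rewrite dlt_sym. apply (uniqueness_limite (fun t => F (G (upd y j t)) a) (y j)); [exact C|].
    apply (dpl_ext (fun s => upd y j s a)); [intro s; rewrite FG; auto|exact (ld_proj a j y)]. }
  assert (HN : 3 <= INR (n + 1)).
  { rewrite plus_INR. apply le_INR in hn. simpl in *. lra. }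
  assert (Hzero := core (n + 1) (epsn n) (tim n) DF EF (fun x k a => DG k a (F x))
    (epsn2 n) HN dDF Sym KJ JK W Qoff Qdiag).
  intros k j. destruct k.
  - split; auto.
  - split; [apply HFc|]. exists (DF j); split; [intros i x; apply dF|].
    intro i. apply Ck_flat; [apply DFc|]. intros k' y.
    pose proof (dDF j i k' y) as D. rewrite Hzero in D. exact D.
Qed.
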